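(* For $n\ge 2$, the expected number of indices $k\in\{2,\dots,n\}$ such that the $(k-1)$-th and $k$-th boundary steps are both south steps, in a uniformly random type-B permutation tableau of size $n$, equals $\dfrac{2n-1}{24}$.
   Context: A Ferrers diagram is a left-justified array of cells whose row lengths weakly decrease from top to bottom (rows of length $0$ are allowed). Its half-perimeter is the number of rows plus the number of columns. Its southeast boundary, traversed from the northeast corner to the southwest corner, consists of $n$ unit steps, each south or west; south steps correspond to rows and west steps to columns. If the diagram has $c$ columns, the shifted Ferrers diagram is obtained by inserting $c$ new left-justified rows above it, of lengths $c,c-1,\dots,1$ from top to bottom; the rightmost cell of each inserted row is a diagonal cell. A type-B permutation tableau of size $n$ is a filling of a shifted Ferrers diagram of half-perimeter $n$ with $0$'s and $1$'s such that: (1) every column contains at least one $1$; (2) no $0$ has both a $1$ above it in its column and a $1$ to its left in its row; (3) if a diagonal cell contains $0$ then every cell of its row contains $0$. The boundary steps of the shifted diagram are those of the underlying Ferrers diagram. Let $\mathcal{B}_n$ be the set of such tableaux with uniform probability measure $\mathbb{P}_n$ and expectation $\mathbb{E}_n$. *)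

(* Defs.v *)
From mathcomp Require Import all_boot all_order all_algebra.
Set Implicit Arguments. Unset Strict Implicit. Unset Printing Implicit Defensive.
Import GRing.Theory Num.Theory.

(* Boundary word w : seq bool of the underlying Ferrers diagram, read from the
   NE corner to the SW corner; [true] = south step (a row), [false] = west step
   (a column).  Steps are indexed 0..n-1 here (step k+1 of the paper is
   [nth false w k]). *)

Definition ncols (w : seq bool) : nat := count negb w.

Definition spos (w : seq bool) : seq nat := [seq k <- iota 0 (size w) | nth false w k].

(* Rows of the shifted diagram, indexed from the top (0-based).
   Rows 0 .. c-1 are the inserted rows: row i has length i+1 (left-justified),
   its diagonal cell is in column i.
   Row c + m is the m-th row of the Ferrers diagram (m-th south step), whose
   length is the number of west steps after that south step. *)
Definition rowlen (w : seq bool) (i : nat) : nat :=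
  if i < ncols w then i.+1
  else count negb (drop (nth 0 (spos w) (i - ncols w)).+1 w).

(* the shifted diagram has c + r = size w rows; cells are (row, column), 0-based *)
Definition in_shape (w : seq bool) (i j : nat) : bool :=
  (i < size w) && (j < rowlen w i).

(* A type-B permutation tableau of size n: a boundary word plus a 0/1 filling
   of the n x n grid which is 0 outside the shifted diagram. *)
Definition Tab (n : nat) : finType :=
  (n.-tuple bool * {ffun 'I_n * 'I_n -> bool})%type.

Definition is_Btableau (n : nat) (t : Tab n) : bool :=
  let w := tval t.1 in
  let f := t.2 in
  [&&
      [forall i : 'I_n, forall j : 'I_n, ~~ in_shape w i j ==> ~~ f (i, j)],
      [forall j : 'I_n, (j < ncols w) ==>
          [exists i : 'I_n, in_shape w i j && f (i, j)]],
      [forall i : 'I_n, forall j : 'I_n, (in_shape w i j && ~~ f (i, j)) ==>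
          ~~ ([exists i' : 'I_n, (i' < i) && f (i', j)] &&
              [exists j' : 'I_n, (j' < j) && f (i, j')])] &
      [forall i : 'I_n, ((i < ncols w) && ~~ f (i, i)) ==>
          [forall j : 'I_n, ~~ f (i, j)]] ].

Definition Btableaux (n : nat) : {set Tab n} := [set t | is_Btableau t].

Definition double_south (w : seq bool) : nat :=
  \sum_(1 <= k < size w) (nth false w k.-1 && nth false w k).

Definition E_unif (n : nat) (X : Tab n -> nat) : rat :=
  (\sum_(t in Btableaux n) (X t)%:R) / (#|Btableaux n|)%:R.

(* Main.v *)
Require Import Defs.
From mathcomp Require Import all_boot all_order all_algebra.
From mathcomp Require Import zify ring lra.
Set Implicit Arguments. Unset Strict Implicit. Unset Printing Implicit Defensive.
Import GRing.Theory Num.Theory.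

Lemma ltn_liftb n (p : 'I_n.+1) (i j : 'I_n) : (lift p i < lift p j) = (i < j).
Proof. rewrite /= /bump; case: (leqP p i); case: (leqP p j) => /= h1 h2; lia. Qed.

Lemma forall_lift n (p : 'I_n.+1) (P : pred 'I_n.+1) :
  [forall i, P i] = P p && [forall i : 'I_n, P (lift p i)].
Proof.
apply/forallP/andP => [H|[H1 /forallP H2] i]; first by split => //; apply/forallP.
by case: (unliftP p i) => [j ->|->].
Qed.

Lemma exists_lift n (p : 'I_n.+1) (P : pred 'I_n.+1) :
  [exists i, P i] = P p || [exists i : 'I_n, P (lift p i)].
Proof.
apply/existsP/orP => [[i]|[H|/existsP[i H]]]; last 2 first.
- by exists p. - by exists (lift p i).
by case: (unliftP p i) => [j ->|->] H; [right; apply/existsP; exists j|left].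
Qed.

Lemma forall_andb (T : finType) (P Q : pred T) :
  [forall x, P x && Q x] = [forall x, P x] && [forall x, Q x].
Proof.
apply/forallP/andP => [H|[/forallP H1 /forallP H2] x]; last by rewrite H1 H2.
by split; apply/forallP => x; case/andP: (H x).
Qed.

Lemma forall_true (T : finType) : [forall x : T, true] = true.
Proof. by apply/forallP. Qed.
Lemma exists_false (T : finType) : [exists x : T, false] = false.
Proof. by apply/existsP => -[]. Qed.

Definition gjoin n (p : 'I_n.+1) (a : {ffun 'I_n * 'I_n -> bool})
  (c : {ffun 'I_n.+1 -> bool}) (r : {ffun 'I_n -> bool}) : {ffun 'I_n.+1 * 'I_n.+1 -> bool} :=
  [ffun ij => match unlift p ij.2 with
              | None => c ij.1
              | Some j => match unlift p ij.1 with None => r j | Some i => a (i, j) end end].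

Lemma gjoin_ll n p a c r (i j : 'I_n) : gjoin p a c r (lift p i, lift p j) = a (i, j).
Proof. by rewrite ffunE /= !liftK. Qed.
Lemma gjoin_xp n p a c r (i : 'I_n.+1) : gjoin p a c r (i, p) = c i.
Proof. by rewrite ffunE /= unlift_none. Qed.
Lemma gjoin_pl n p a c r (j : 'I_n) : gjoin p a c r (p, lift p j) = r j.
Proof. by rewrite ffunE /= liftK unlift_none. Qed.

Lemma sum_gjoin n (p : 'I_n.+1) (G : {ffun 'I_n.+1 * 'I_n.+1 -> bool} -> rat) :
  (\sum_F G F = \sum_a \sum_c \sum_r G (gjoin p a c r))%R.
Proof.
rewrite (reindex (fun x : {ffun 'I_n * 'I_n -> bool} * {ffun 'I_n.+1 -> bool} * {ffun 'I_n -> bool} =>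
   gjoin p x.1.1 x.1.2 x.2)) /=.
  rewrite -(pair_bigA _ (fun u v => G (gjoin p u.1 u.2 v))) /= -(pair_bigA _ (fun u v => \sum_r G (gjoin p u v r))%R) /=.
  by apply: eq_bigr => a _; apply: eq_bigr => c _; apply: eq_bigr.
exists (fun F => ([ffun ij => F (lift p ij.1, lift p ij.2)], [ffun i => F (i, p)],
                  [ffun j => F (p, lift p j)])) => [[[a c] r] _|F _] /=.
  congr (_, _, _); apply/ffunP => x; rewrite ffunE.
  - by case: x => i j; rewrite gjoin_ll.
  - by rewrite gjoin_xp.
  - by rewrite gjoin_pl.
apply/ffunP => -[i j]; rewrite ffunE /=.
case: (unliftP p j) => [j' ->|->]; last by rewrite ffunE.
case: (unliftP p i) => [i' ->|->]; by rewrite ffunE.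
Qed.

Definition cjoin n (b : bool) (c : {ffun 'I_n -> bool}) : {ffun 'I_n.+1 -> bool} :=
  [ffun i => if unlift ord0 i is Some j then c j else b].
Lemma cjoin0 n b (c : {ffun 'I_n -> bool}) : cjoin b c ord0 = b.
Proof. by rewrite ffunE unlift_none. Qed.
Lemma cjoinS n b (c : {ffun 'I_n -> bool}) j : cjoin b c (lift ord0 j) = c j.
Proof. by rewrite ffunE liftK. Qed.

Lemma sum_cjoin n (G : {ffun 'I_n.+1 -> bool} -> rat) :
  (\sum_c G c = \sum_b \sum_c' G (cjoin b c'))%R.
Proof.
rewrite (reindex (fun x : bool * {ffun 'I_n -> bool} => cjoin x.1 x.2)) /=.
  by rewrite -(pair_bigA _ (fun u v => G (cjoin u v))).
exists (fun c => (c ord0, [ffun j => c (lift ord0 j)])) => [[b c] _|c _] /=.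
  by rewrite cjoin0; congr (_, _); apply/ffunP => j; rewrite ffunE cjoinS.
apply/ffunP => i; rewrite ffunE.
by case: (unliftP ord0 i) => [j ->|->] //; rewrite ffunE.
Qed.

Lemma sum_tuple_rcons n (G : seq bool -> rat) :
  (\sum_(t : n.+1.-tuple bool) G t = \sum_(t : n.-tuple bool) (G (rcons t true) + G (rcons t false)))%R.
Proof.
have hb : bijective (fun x : n.-tuple bool * bool => rcons_tuple x.1 x.2).
  apply: inj_card_bij.
    move=> [t1 b1] [t2 b2] /(congr1 val) /= /eqP; rewrite eqseq_rcons => /andP[/eqP h /eqP ->].
    by congr (_, _); apply: val_inj.
  by rewrite card_prod !card_tuple card_bool expnS mulnC.
rewrite (reindex _ (onW_bij _ hb)) /= -(pair_bigA _ (fun u v => G (rcons_tuple u v))) /=.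
by apply: eq_bigr => t _; rewrite big_bool.
Qed.

Lemma ncols_rcons (w : seq bool) b : ncols (rcons w b) = ncols w + ~~ b.
Proof. by rewrite /ncols -cats1 count_cat /= addn0. Qed.

Lemma ncols_le (w : seq bool) : ncols w <= size w.
Proof. exact: count_size. Qed.

Lemma size_spos (w : seq bool) : size (spos w) = size w - ncols w.
Proof.
rewrite /spos size_filter.
have -> : count (nth false w) (iota 0 (size w)) = count id w.
  by rewrite -{3}(mkseq_nth false w) /mkseq count_map.
by rewrite -(count_predC id w) /ncols addnK.
Qed.

Lemma spos_lt (w : seq bool) k : k < size (spos w) -> nth 0 (spos w) k < size w.
Proof.
move=> hk; have : nth 0 (spos w) k \in spos w by apply: mem_nth.
by rewrite mem_filter mem_iota add0n => /andP[].
Qed.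

Lemma spos_rcons (w : seq bool) b :
  spos (rcons w b) = if b then rcons (spos w) (size w) else spos w.
Proof.
rewrite /spos size_rcons -addn1 iotaD add0n cats1 filter_rcons nth_rcons ltnn eqxx.
have -> : [seq k <- iota 0 (size w) | nth false (rcons w b) k] = [seq k <- iota 0 (size w) | nth false w k].
  by apply: eq_in_filter => k; rewrite mem_iota add0n => /andP[_ hk]; rewrite nth_rcons hk.
by case: b.
Qed.

Lemma count_drop_le (w : seq bool) k : count negb (drop k w) <= count negb w.
Proof. by rewrite -{2}(cat_take_drop k w) count_cat leq_addl. Qed.

Lemma rowlen_le (w : seq bool) i : rowlen w i <= ncols w.
Proof. rewrite /rowlen; case: ifP => // h; exact: count_drop_le. Qed.

Lemma rowlenS (w : seq bool) i : i < size w -> rowlen (rcons w true) i = rowlen w i.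
Proof.
move=> hi; rewrite /rowlen ncols_rcons addn0 spos_rcons; case: ifP => // hc.
have hk : i - ncols w < size (spos w) by rewrite size_spos; lia.
rewrite nth_rcons hk drop_rcons; last exact: spos_lt.
by rewrite -cats1 count_cat /= !addn0.
Qed.

Lemma rowlenS_last (w : seq bool) : rowlen (rcons w true) (size w) = 0.
Proof.
rewrite /rowlen ncols_rcons addn0 spos_rcons.
have := ncols_le w; rewrite leq_eqVlt => /orP[/eqP e|hc].
  rewrite e ltnn subnn nth_rcons.
  have -> : size (spos w) = 0 by rewrite size_spos e subnn.
  by rewrite eqxx drop_oversize // size_rcons.
rewrite ltnNge (ltnW hc) /= nth_rcons size_spos ltnn eqxx drop_oversize //.
by rewrite size_rcons.
Qed.

Lemma rowlenW0 (w : seq bool) : rowlen (rcons w false) 0 = 1.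
Proof. by rewrite /rowlen ncols_rcons addn1. Qed.

Lemma rowlenWS (w : seq bool) i : i < size w -> rowlen (rcons w false) i.+1 = (rowlen w i).+1.
Proof.
move=> hi; rewrite /rowlen ncols_rcons addn1 ltnS spos_rcons subSS; case: ifP => // hc.
have hk : i - ncols w < size (spos w) by rewrite size_spos; lia.
rewrite drop_rcons; last exact: spos_lt.
by rewrite -cats1 count_cat /= addn1.
Qed.

Section Shapes.
Variables (n : nat) (w : seq bool).
Hypothesis hw : size w = n.

Lemma shS_ll (i j : 'I_n) :
  in_shape (rcons w true) (lift ord_max i) (lift ord_max j) = in_shape w i j.
Proof. by rewrite /in_shape !lift_max size_rcons rowlenS ?hw ?ltn_ord // ltnS ltnW. Qed.
Lemma shS_xp (i : 'I_n.+1) : in_shape (rcons w true) i (@ord_max n) = false.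
Proof.
rewrite /in_shape /=; apply/negbTE; rewrite negb_and; apply/orP; right; rewrite -leqNgt.
apply: (leq_trans (rowlen_le _ _)); by rewrite ncols_rcons addn0 -hw ncols_le.
Qed.
Lemma shS_pl (j : 'I_n.+1) : in_shape (rcons w true) (@ord_max n) j = false.
Proof. rewrite /in_shape /=; have := rowlenS_last w; rewrite hw => ->; by rewrite ltn0 andbF. Qed.
Lemma ncS_p : (@ord_max n < ncols (rcons w true)) = false.
Proof. by rewrite /= ncols_rcons addn0 ltnNge -hw ncols_le. Qed.
Lemma ncS_l (j : 'I_n) : (lift ord_max j < ncols (rcons w true)) = (j < ncols w).
Proof. by rewrite lift_max ncols_rcons addn0. Qed.

Lemma shW_ll (i j : 'I_n) :
  in_shape (rcons w false) (lift ord0 i) (lift ord0 j) = in_shape w i j.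
Proof. by rewrite /in_shape !lift0 size_rcons rowlenWS hw ?ltn_ord // !ltnS ltn_ord. Qed.
Lemma shW_00 : in_shape (rcons w false) (@ord0 n) (@ord0 n) = true.
Proof. by rewrite /in_shape /= rowlenW0 size_rcons. Qed.
Lemma shW_l0 (i : 'I_n) : in_shape (rcons w false) (lift ord0 i) (@ord0 n) = true.
Proof. by rewrite /in_shape lift0 /= rowlenWS ?hw ?ltn_ord // size_rcons hw ltnS ltn_ord. Qed.
Lemma shW_0l (j : 'I_n) : in_shape (rcons w false) (@ord0 n) (lift ord0 j) = false.
Proof. by rewrite /in_shape lift0 /= rowlenW0 ltnS ltn0 andbF. Qed.
Lemma ncW_p : (@ord0 n < ncols (rcons w false)) = true.
Proof. by rewrite /= ncols_rcons addn1. Qed.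
Lemma ncW_l (j : 'I_n) : (lift ord0 j < ncols (rcons w false)) = (j < ncols w).
Proof. by rewrite lift0 ncols_rcons addn1 ltnS. Qed.
End Shapes.

Lemma ltS_lp n (i : 'I_n) : (lift ord_max i < @ord_max n) = true.
Proof. by rewrite lift_max ltn_ord. Qed.
Lemma ltS_pl n (i : 'I_n) : (@ord_max n < lift ord_max i) = false.
Proof. by rewrite lift_max /= ltnNge ltnW. Qed.
Lemma ltW_l0 n (i : 'I_n) : (lift ord0 i < @ord0 n) = false.
Proof. by []. Qed.
Lemma ltW_0l n (i : 'I_n) : (@ord0 n < lift ord0 i) = true.
Proof. by rewrite lift0. Qed.
Lemma ltpp n (p : 'I_n) : (p < p) = false.
Proof. exact: ltnn. Qed.

Lemma forall_liftE n (p : 'I_n.+1) (P : pred 'I_n.+1) Q1 (Q2 : pred 'I_n) :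
  P p = Q1 -> (forall i, P (lift p i) = Q2 i) -> [forall i, P i] = Q1 && [forall i, Q2 i].
Proof. by move=> h1 h2; rewrite (forall_lift p) h1; congr (_ && _); apply: eq_forallb. Qed.
Lemma exists_liftE n (p : 'I_n.+1) (P : pred 'I_n.+1) Q1 (Q2 : pred 'I_n) :
  P p = Q1 -> (forall i, P (lift p i) = Q2 i) -> [exists i, P i] = Q1 || [exists i, Q2 i].
Proof. by move=> h1 h2; rewrite (exists_lift p) h1; congr (_ || _); apply: eq_existsb. Qed.
Lemma forall2_liftE n (p : 'I_n.+1) (P : 'I_n.+1 -> 'I_n.+1 -> bool) Q1 (Q2 Q3 : pred 'I_n) (Q4 : 'I_n -> 'I_n -> bool) :
  P p p = Q1 -> (forall j, P p (lift p j) = Q2 j) -> (forall i, P (lift p i) p = Q3 i) ->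
  (forall i j, P (lift p i) (lift p j) = Q4 i j) ->
  [forall i, forall j, P i j] = [&& Q1, [forall j, Q2 j], [forall i, Q3 i] & [forall i, forall j, Q4 i j]].
Proof.
move=> h1 h2 h3 h4.
rewrite (forall_lift p (fun i => [forall j, P i j])) (forall_lift p (P p)) h1 (eq_forallb h2).
have -> : [forall i, [forall j, P (lift p i) j]] = [forall i, Q3 i && [forall j, Q4 i j]].
  by apply: eq_forallb => i; rewrite (forall_lift p) h3 (eq_forallb (h4 i)).
by rewrite forall_andb !andbA.
Qed.

Ltac bnotconst b := lazymatch b with true => fail | false => fail | _ && _ => fail | _ || _ => fail | ~~ _ => fail | _ ==> _ => fail | _ => idtac end.
Ltac bgen b := let x := fresh "x" in set x := b; clearbody x; case: x.
Ltac bcases := repeat match goal with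
  | |- context [ ?b && _ ] => bnotconst b; bgen b
  | |- context [ _ && ?b ] => bnotconst b; bgen b
  | |- context [ ?b || _ ] => bnotconst b; bgen b
  | |- context [ _ || ?b ] => bnotconst b; bgen b
  | |- context [ ~~ ?b ] => bnotconst b; bgen b
  | |- context [ ?b ==> _ ] => bnotconst b; bgen b
  | |- context [ _ ==> ?b ] => bnotconst b; bgen b
  end.

Definition C1 n (w : seq bool) (f : {ffun 'I_n * 'I_n -> bool}) :=
  [forall i : 'I_n, forall j : 'I_n, ~~ in_shape w i j ==> ~~ f (i, j)].
Definition C2 n (w : seq bool) (f : {ffun 'I_n * 'I_n -> bool}) :=
  [forall j : 'I_n, (j < ncols w) ==> [exists i : 'I_n, in_shape w i j && f (i, j)]].
Definition C3 n (w : seq bool) (f : {ffun 'I_n * 'I_n -> bool}) :=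
  [forall i : 'I_n, forall j : 'I_n, (in_shape w i j && ~~ f (i, j)) ==>
          ~~ ([exists i' : 'I_n, (i' < i) && f (i', j)] &&
              [exists j' : 'I_n, (j' < j) && f (i, j')])].
Definition C4 n (w : seq bool) (f : {ffun 'I_n * 'I_n -> bool}) :=
  [forall i : 'I_n, ((i < ncols w) && ~~ f (i, i)) ==> [forall j : 'I_n, ~~ f (i, j)]].
Definition validB n (w : seq bool) (f : {ffun 'I_n * 'I_n -> bool}) :=
  [&& C1 w f, C2 w f, C3 w f & C4 w f].

Lemma validB_is n (t : Tab n) : is_Btableau t = validB (tval t.1) t.2.
Proof. by []. Qed.

Definition free_row n (w : seq bool) (f : {ffun 'I_n * 'I_n -> bool}) (i : 'I_n) : bool :=
  ~~ ((i < ncols w) && ~~ f (i, i)) &&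
  [forall j : 'I_n, (in_shape w i j && ~~ f (i, j)) ==> ~~ [exists x : 'I_n, (x < i) && f (x, j)]].
Definition nfree n (w : seq bool) (f : {ffun 'I_n * 'I_n -> bool}) : nat :=
  \sum_(i < n) free_row w f i.

Lemma sum_lift n (p : 'I_n.+1) (G : 'I_n.+1 -> nat) : \sum_(i < n.+1) G i = G p + \sum_(i < n) G (lift p i).
Proof. by rewrite (bigD1_ord p). Qed.

Section CaseS.
Variables (n : nat) (w : seq bool).
Hypothesis hw : size w = n.
Variables (a : {ffun 'I_n * 'I_n -> bool}) (c : {ffun 'I_n.+1 -> bool}) (r : {ffun 'I_n -> bool}).
Local Notation F := (gjoin ord_max a c r).
Local Notation w' := (rcons w true).

Lemma C1S : C1 w' F = [&& C1 w a, [forall i, ~~ c i] & [forall j, ~~ r j]].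
Proof.
rewrite /C1; erewrite (forall2_liftE (p := @ord_max n)); last first.
- by move=> i j; rewrite (@shS_ll n w hw) gjoin_ll.
- by move=> i; rewrite (@shS_xp n w hw) gjoin_xp /=.
- by move=> j; rewrite (@shS_pl n w hw) gjoin_pl /=.
- by rewrite (@shS_xp n w hw) gjoin_xp /=.
rewrite [[forall i, ~~ c i]](forall_lift ord_max).
rewrite /=. by bcases.
Qed.

Lemma C2S : C2 w' F = C2 w a.
Proof.
rewrite /C2; erewrite (forall_liftE (p := @ord_max n)); last first.
- move=> j; rewrite (@ncS_l n w); erewrite (exists_liftE (p := @ord_max n)); last first.
  + by move=> i; rewrite (@shS_ll n w hw) gjoin_ll.
  + by rewrite (@shS_pl n w hw).
  by rewrite /=.
- by rewrite (@ncS_p n w hw).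
done.
Qed.

Lemma E1S (i j : 'I_n) : [exists x : 'I_n.+1, (x < lift ord_max i) && F (x, lift ord_max j)] = [exists x : 'I_n, (x < i) && a (x, j)].
Proof.
erewrite (exists_liftE (p := @ord_max n)); last first.
+ by move=> i'; rewrite ltn_liftb gjoin_ll.
+ by rewrite ltS_pl.
by [].
Qed.
Lemma E2S (i j : 'I_n) : [exists y : 'I_n.+1, (y < lift ord_max j) && F (lift ord_max i, y)] = [exists y : 'I_n, (y < j) && a (i, y)].
Proof.
erewrite (exists_liftE (p := @ord_max n)); last first.
+ by move=> i'; rewrite ltn_liftb gjoin_ll.
+ by rewrite ltS_pl.
by [].
Qed.

Lemma C3S : C3 w' F = C3 w a.
Proof.
rewrite /C3; erewrite (forall2_liftE (p := @ord_max n)); last first.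
- move=> i j; rewrite (@shS_ll n w hw) gjoin_ll.
  by rewrite E1S E2S.
- by move=> i; rewrite (@shS_xp n w hw).
- by move=> j; rewrite (@shS_pl n w hw).
- by rewrite (@shS_pl n w hw).
by rewrite /= !forall_true.
Qed.

Lemma C4S : C4 w' F = [forall i : 'I_n, ((i < ncols w) && ~~ a (i, i)) ==>
                         (~~ c (lift ord_max i) && [forall j, ~~ a (i, j)])].
Proof.
rewrite /C4; erewrite (forall_liftE (p := @ord_max n)); last first.
- move=> i; rewrite (@ncS_l n w) gjoin_ll.
  erewrite (forall_liftE (p := @ord_max n)); last first.
  + by move=> j; rewrite gjoin_ll.
  + by rewrite gjoin_xp.
  by [].
- by rewrite (@ncS_p n w hw).
by rewrite /=.
Qed.

Lemma validS : validB w' F = [&& validB w a, [forall i, ~~ c i] & [forall j, ~~ r j]].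
Proof.
rewrite /validB C1S C2S C3S C4S.
case: (boolP [forall i, ~~ c i]) => hc; last by bcases.
have -> : [forall i : 'I_n, ((i < ncols w) && ~~ a (i, i)) ==>
                         (~~ c (lift ord_max i) && [forall j, ~~ a (i, j)])] = C4 w a.
  by apply: eq_forallb => i; rewrite (forallP hc).
by bcases.
Qed.

Lemma freeS_p : free_row w' F ord_max = true.
Proof.
rewrite /free_row (@ncS_p n w hw) /=.
by apply/forallP => j; rewrite (@shS_pl n w hw).
Qed.
Lemma freeS_l i : free_row w' F (lift ord_max i) = free_row w a i.
Proof.
rewrite /free_row (@ncS_l n w) gjoin_ll.
erewrite (forall_liftE (p := @ord_max n)); last first.
- by move=> j; rewrite (@shS_ll n w hw) gjoin_ll E1S.
- by rewrite (@shS_xp n w hw).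
by [].
Qed.
Lemma nfreeS : nfree w' F = (nfree w a).+1.
Proof.
rewrite /nfree (sum_lift ord_max) freeS_p add1n; congr _.+1.
by apply: eq_bigr => i _; rewrite freeS_l.
Qed.
End CaseS.

Section CaseW.
Variables (n : nat) (w : seq bool).
Hypothesis hw : size w = n.
Variables (a : {ffun 'I_n * 'I_n -> bool}) (c : {ffun 'I_n.+1 -> bool}) (r : {ffun 'I_n -> bool}).
Local Notation F := (gjoin ord0 a c r).
Local Notation w' := (rcons w false).

Lemma E1W (i j : 'I_n) : [exists x : 'I_n.+1, (x < lift ord0 i) && F (x, lift ord0 j)] =
   r j || [exists x : 'I_n, (x < i) && a (x, j)].
Proof.
erewrite (exists_liftE (p := @ord0 n)); last first.
+ by move=> i'; rewrite ltn_liftb gjoin_ll.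
+ by rewrite ltW_0l gjoin_pl.
by [].
Qed.
Lemma E2W (i j : 'I_n) : [exists y : 'I_n.+1, (y < lift ord0 j) && F (lift ord0 i, y)] =
   c (lift ord0 i) || [exists y : 'I_n, (y < j) && a (i, y)].
Proof.
erewrite (exists_liftE (p := @ord0 n)); last first.
+ by move=> i'; rewrite ltn_liftb gjoin_ll.
+ by rewrite ltW_0l gjoin_xp.
by [].
Qed.
Lemma E1Wc (i : 'I_n) : [exists x : 'I_n.+1, (x < lift ord0 i) && F (x, ord0)] =
   c ord0 || [exists x : 'I_n, (x < i) && c (lift ord0 x)].
Proof.
erewrite (exists_liftE (p := @ord0 n)); last first.
+ by move=> i'; rewrite ltn_liftb gjoin_xp.
+ by rewrite ltW_0l gjoin_xp.
by [].
Qed.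
Lemma ex_lt0 (P : pred 'I_n.+1) : [exists x : 'I_n.+1, (x < @ord0 n) && P x] = false.
Proof. by apply/existsP => -[x]; rewrite ltn0. Qed.

Lemma C1W : C1 w' F = C1 w a && [forall j, ~~ r j].
Proof.
rewrite /C1; erewrite (forall2_liftE (p := @ord0 n)); last first.
- by move=> i j; rewrite (@shW_ll n w hw) gjoin_ll.
- by move=> i; rewrite (@shW_l0 n w hw).
- by move=> j; rewrite (@shW_0l n w) gjoin_pl /=.
- by rewrite (@shW_00 n w).
by rewrite /= !forall_true; bcases.
Qed.

Lemma C2W : C2 w' F = [exists i, c i] && C2 w a.
Proof.
rewrite /C2; erewrite (forall_liftE (p := @ord0 n)); last first.
- move=> j; rewrite (@ncW_l n w); erewrite (exists_liftE (p := @ord0 n)); last first.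
  + by move=> i; rewrite (@shW_ll n w hw) gjoin_ll.
  + by rewrite (@shW_0l n w).
  by rewrite /=.
- rewrite (@ncW_p n w) /=.
  have -> : [exists i : 'I_n.+1, in_shape w' i (@ord0 n) && F (i, ord0)] = [exists i, c i].
    apply: eq_existsb => i; rewrite gjoin_xp.
    by case: (unliftP ord0 i) => [i' ->|->]; rewrite ?(@shW_l0 n w hw) ?(@shW_00 n w).
  by [].
done.
Qed.

Lemma C3W : C3 w' F = [forall i : 'I_n, forall j : 'I_n, (in_shape w i j && ~~ a (i, j)) ==>
   ~~ ((r j || [exists x : 'I_n, (x < i) && a (x, j)]) &&
       (c (lift ord0 i) || [exists y : 'I_n, (y < j) && a (i, y)]))].
Proof.
rewrite /C3; erewrite (forall2_liftE (p := @ord0 n)); last first.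
- by move=> i j; rewrite (@shW_ll n w hw) gjoin_ll E1W E2W.
- by move=> i; rewrite ex_lt0 andbF /= implybT.
- by move=> j; rewrite (@shW_0l n w).
- by rewrite ex_lt0 /= implybT.
by rewrite /= !forall_true.
Qed.

Lemma C4W : C4 w' F = (~~ c ord0 ==> (~~ c ord0 && [forall j, ~~ r j])) &&
  [forall i : 'I_n, ((i < ncols w) && ~~ a (i, i)) ==> (~~ c (lift ord0 i) && [forall j, ~~ a (i, j)])].
Proof.
rewrite /C4; erewrite (forall_liftE (p := @ord0 n)); last first.
- move=> i; rewrite (@ncW_l n w) gjoin_ll.
  erewrite (forall_liftE (p := @ord0 n)); last first.
  + by move=> j; rewrite gjoin_ll.
  + by rewrite gjoin_xp.
  by [].
- rewrite (@ncW_p n w) gjoin_xp /=.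
  erewrite (forall_liftE (p := @ord0 n)); last first.
  + by move=> j; rewrite gjoin_pl.
  + by rewrite gjoin_xp.
  by [].
by [].
Qed.

Lemma C3W0 (hr : forall j, r j = false) : C3 w' F = [forall i : 'I_n, forall j : 'I_n, (in_shape w i j && ~~ a (i, j)) ==>
   ~~ ([exists x : 'I_n, (x < i) && a (x, j)] &&
       (c (lift ord0 i) || [exists y : 'I_n, (y < j) && a (i, y)]))].
Proof.
rewrite /C3; erewrite (forall2_liftE (p := @ord0 n)); last first.
- by move=> i j; rewrite (@shW_ll n w hw) gjoin_ll E1W E2W hr orFb.
- by move=> i; rewrite ex_lt0 andbF /= implybT.
- by move=> j; rewrite (@shW_0l n w).
- by rewrite ex_lt0 /= implybT.
by rewrite /= !forall_true.
Qed.

Lemma mergeW :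
  [forall i : 'I_n, forall j : 'I_n, (in_shape w i j && ~~ a (i, j)) ==>
   ~~ ([exists x : 'I_n, (x < i) && a (x, j)] &&
       (c (lift ord0 i) || [exists y : 'I_n, (y < j) && a (i, y)]))] &&
  [forall i : 'I_n, ((i < ncols w) && ~~ a (i, i)) ==> (~~ c (lift ord0 i) && [forall j, ~~ a (i, j)])]
  = [&& C3 w a, C4 w a & [forall i, c (lift ord0 i) ==> free_row w a i]].
Proof.
rewrite /C3 /C4 -!forall_andb; apply: eq_forallb => i /=.
rewrite /free_row.
case: (c (lift ord0 i)) => /=.
  under eq_forallb => j do rewrite andbT.
  case: (boolP [forall j : 'I_n, in_shape w i j && ~~ a (i, j) ==> ~~ [exists x : 'I_n, (x < i) && a (x, j)]]) => hd; last by bcases.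
  have -> : [forall j : 'I_n, in_shape w i j && ~~ a (i, j) ==>
         ~~ ([exists i' : 'I_n, (i' < i) && a (i', j)] && [exists j' : 'I_n, (j' < j) && a (i, j')])] = true.
    by apply/forallP => j; move: (forallP hd j); bcases.
  by bcases.
by rewrite andbT.
Qed.

Lemma validW : validB w' F = [&& validB w a, [forall j, ~~ r j], [exists i, c i] &
   [forall i, c (lift ord0 i) ==> free_row w a i]].
Proof.
rewrite /validB C1W C2W C4W.
case: (boolP [forall j, ~~ r j]) => hr; last by bcases.
rewrite C3W0; last by move=> j; apply: negbTE (forallP hr j).
rewrite !andbT (_ : (~~ c ord0 ==> ~~ c ord0) = true); last by case: (c ord0).
rewrite andTb mergeW. by bcases.
Qed.
End CaseW.

Section FreeW.
Variables (n : nat) (w : seq bool).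
Hypothesis hw : size w = n.
Variables (a : {ffun 'I_n * 'I_n -> bool}) (c : {ffun 'I_n.+1 -> bool}) (r : {ffun 'I_n -> bool}).
Local Notation F := (gjoin ord0 a c r).
Local Notation w' := (rcons w false).

Lemma freeW_0 : free_row w' F ord0 = c ord0.
Proof.
rewrite /free_row (@ncW_p n w) gjoin_xp /=.
have -> : [forall j : 'I_n.+1, in_shape w' (@ord0 n) j && ~~ F (ord0, j) ==>
            ~~ [exists x : 'I_n.+1, (x < @ord0 n) && F (x, j)]] = true.
  by apply/forallP => j; rewrite ex_lt0 implybT.
by rewrite andbT negbK.
Qed.

Lemma freeW_l (hr : forall j, r j = false) i : free_row w' F (lift ord0 i) =
  free_row w a i && (c (lift ord0 i) || ~~ (c ord0 || [exists x : 'I_n, (x < i) && c (lift ord0 x)])).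
Proof.
rewrite /free_row (@ncW_l n w) gjoin_ll.
erewrite (forall_liftE (p := @ord0 n)); last first.
- by move=> j; rewrite (@shW_ll n w hw) gjoin_ll E1W hr orFb.
- by rewrite (@shW_l0 n w hw) gjoin_xp E1Wc.
by bcases.
Qed.

Lemma nfreeW (hr : forall j, r j = false) : nfree w' F =
  (c ord0 + \sum_(i < n) (free_row w a i && (c (lift ord0 i) ||
        ~~ (c ord0 || [exists x : 'I_n, (x < i) && c (lift ord0 x)]))))%N.
Proof.
rewrite /nfree (sum_lift ord0) freeW_0; congr (_ + _)%N.
by apply: eq_bigr => i _; rewrite freeW_l.
Qed.
End FreeW.

Section ColSum.
Local Open Scope ring_scope.

Lemma sum_ffun0 (G : {ffun 'I_0 -> bool} -> rat) : \sum_c G c = G [ffun => false].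
Proof.
rewrite (big_pred1 [ffun => false]) // => c /=.
by apply/esym/eqP/ffunP => -[].
Qed.

Lemma exc_lift n b (c : {ffun 'I_n -> bool}) (i : 'I_n) :
  [exists x : 'I_n.+1, (x < lift ord0 i)%N && cjoin b c x] = b || [exists x : 'I_n, (x < i)%N && c x].
Proof.
erewrite (exists_liftE (p := @ord0 n)); last first.
+ by move=> i'; rewrite ltn_liftb cjoinS.
+ by rewrite ltW_0l cjoin0.
by [].
Qed.
Lemma exc_lt0 n (b : bool) (c : {ffun 'I_n -> bool}) :
  [exists x : 'I_n.+1, (x < @ord0 n)%N && cjoin b c x] = false.
Proof. exact: ex_lt0. Qed.
Lemma exc_all n b (c : {ffun 'I_n -> bool}) : [exists x : 'I_n.+1, cjoin b c x] = b || [exists x, c x].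
Proof.
erewrite (exists_liftE (p := @ord0 n)); last first.
+ by move=> i'; rewrite cjoinS.
+ by rewrite cjoin0.
by [].
Qed.
Lemma forc n b (c : {ffun 'I_n -> bool}) (Fr : pred 'I_n.+1) :
  [forall i, cjoin b c i ==> Fr i] = (b ==> Fr ord0) && [forall i, c i ==> Fr (lift ord0 i)].
Proof.
erewrite (forall_liftE (p := @ord0 n)); last first.
+ by move=> i'; rewrite cjoinS.
+ by rewrite cjoin0.
by [].
Qed.

Lemma sum_if_mul (T : finType) (P : pred T) (X : T -> rat) (k : rat) :
  \sum_t (if P t then k * X t else 0) = k * \sum_t (if P t then X t else 0).
Proof. rewrite big_distrr /=; apply: eq_bigr => t _; case: (P t) => //; by rewrite mulr0. Qed.

Lemma L1sum n (Fr : pred 'I_n) (y : rat) :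
  \sum_(c : {ffun 'I_n -> bool}) (if [forall i, c i ==> Fr i] then y ^+ (\sum_(i < n) (Fr i && c i))%N else 0)
  = (1 + y) ^+ (\sum_(i < n) Fr i)%N.
Proof.
elim: n Fr => [|n IH] Fr.
  rewrite sum_ffun0 big_ord0 expr0.
  have -> : [forall i : 'I_0, [ffun=> false] i ==> Fr i] = true by apply/forallP => -[].
  by rewrite big_ord0 expr0.
rewrite sum_cjoin big_bool /=.
have e : forall b (c' : {ffun 'I_n -> bool}),
   (\sum_(i < n.+1) (Fr i && cjoin b c' i))%N = ((Fr ord0 && b) + \sum_(i < n) (Fr (lift ord0 i) && c' i))%N.
  move=> b c'; rewrite (sum_lift ord0) cjoin0; congr (_ + _)%N.
  by apply: eq_bigr => i _; rewrite cjoinS.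
under eq_bigr => c' _ do rewrite forc e.
under [X in _ + X]eq_bigr => c' _ do rewrite forc e.
rewrite (sum_lift ord0); case: (Fr ord0) => /=.
  under eq_bigr => c' _ do rewrite exprD expr1.
  rewrite sum_if_mul IH add1n exprS; ring.
by rewrite big1 // add0r !add0n IH.
Qed.

Lemma Ksum n (Fr : pred 'I_n) (y : rat) :
  \sum_(c : {ffun 'I_n -> bool}) (if [forall i, c i ==> Fr i] then
      y ^+ (\sum_(i < n) (Fr i && (c i || ~~ [exists x : 'I_n, (x < i)%N && c x])))%N else 0)
  = y * (1 + y) ^+ (\sum_(i < n) Fr i)%N - y ^+ (\sum_(i < n) Fr i)%N.+1 + y ^+ (\sum_(i < n) Fr i)%N.
Proof.
elim: n Fr => [|n IH] Fr.
  rewrite sum_ffun0 big_ord0 expr0.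
  have -> : [forall i : 'I_0, [ffun=> false] i ==> Fr i] = true by apply/forallP => -[].
  by rewrite big_ord0 expr0 expr1 mulr1 subrr add0r.
rewrite sum_cjoin big_bool /=.
have et : forall (c' : {ffun 'I_n -> bool}),
   (\sum_(i < n.+1) (Fr i && (cjoin true c' i || ~~ [exists x : 'I_n.+1, (x < i)%N && cjoin true c' x])))%N
   = (Fr ord0 + \sum_(i < n) (Fr (lift ord0 i) && c' i))%N.
  move=> c'; rewrite (sum_lift ord0) cjoin0 orTb andbT; congr (_ + _)%N.
  by apply: eq_bigr => i _; rewrite cjoinS exc_lift orTb orbF.
have ef : forall (c' : {ffun 'I_n -> bool}),
   (\sum_(i < n.+1) (Fr i && (cjoin false c' i || ~~ [exists x : 'I_n.+1, (x < i)%N && cjoin false c' x])))%N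
   = (Fr ord0 + \sum_(i < n) (Fr (lift ord0 i) && (c' i || ~~ [exists x : 'I_n, (x < i)%N && c' x])))%N.
  move=> c'; rewrite (sum_lift ord0) cjoin0 exc_lt0 orFb andbT; congr (_ + _)%N.
  by apply: eq_bigr => i _; rewrite cjoinS exc_lift orFb.
under eq_bigr => c' _ do rewrite forc et.
under [X in _ + X]eq_bigr => c' _ do rewrite forc ef.
rewrite (sum_lift ord0); case: (Fr ord0) => /=.
  under eq_bigr => c' _ do rewrite exprD expr1.
  under [X in _ + X]eq_bigr => c' _ do rewrite exprD expr1.
  rewrite !sum_if_mul L1sum IH !add1n !exprS; ring.
by rewrite big1 // add0r !add0n IH.
Qed.

Definition cz n : {ffun 'I_n -> bool} := [ffun => false].
Lemma czE n i : cz n i = false. Proof. by rewrite ffunE. Qed.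

Lemma sum_exists_split n (G : {ffun 'I_n -> bool} -> rat) :
  \sum_(c : {ffun 'I_n -> bool}) (if [exists i, c i] then G c else 0) = \sum_c G c - G (cz n).
Proof.
rewrite (bigD1 (cz n)) //= [X in _ = X - _](bigD1 (cz n)) //=.
have -> : [exists i, (cz n) i] = false by apply/existsP => -[i]; rewrite czE.
rewrite add0r addrC addrK; apply: eq_bigr => c hc.
case: (boolP [exists i, c i]) => // /existsPn h; exfalso; move/eqP: hc; apply.
by apply/ffunP => i; rewrite czE; apply/negbTE/h.
Qed.

Lemma exc_shift n b (c : {ffun 'I_n -> bool}) (i : 'I_n) :
  [exists x : 'I_n, (x < i)%N && cjoin b c (lift ord0 x)] = [exists x : 'I_n, (x < i)%N && c x].
Proof. by apply: eq_existsb => x; rewrite cjoinS. Qed.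
Lemma forc_shift n b (c : {ffun 'I_n -> bool}) (Fr : pred 'I_n) :
  [forall i, cjoin b c (lift ord0 i) ==> Fr i] = [forall i, c i ==> Fr i].
Proof. by apply: eq_forallb => x; rewrite cjoinS. Qed.

Lemma colsum n (Fr : pred 'I_n) (y : rat) :
  \sum_(c : {ffun 'I_n.+1 -> bool}) (if [exists i, c i] && [forall i, c (lift ord0 i) ==> Fr i] then
   y ^+ (c ord0 + \sum_(i < n) (Fr i && (c (lift ord0 i) ||
          ~~ (c ord0 || [exists x : 'I_n, (x < i)%N && c (lift ord0 x)]))))%N else 0)
  = 2 * y * (1 + y) ^+ (\sum_(i < n) Fr i)%N - y ^+ (\sum_(i < n) Fr i)%N.+1.
Proof.
rewrite sum_cjoin big_bool /=.
have et : forall (c' : {ffun 'I_n -> bool}),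
  (if [exists i, cjoin true c' i] && [forall i, cjoin true c' (lift ord0 i) ==> Fr i] then
   y ^+ (cjoin true c' ord0 + \sum_(i < n) (Fr i && (cjoin true c' (lift ord0 i) ||
          ~~ (cjoin true c' ord0 || [exists x : 'I_n, (x < i)%N && cjoin true c' (lift ord0 x)]))))%N else 0)
  = y * (if [forall i, c' i ==> Fr i] then y ^+ (\sum_(i < n) (Fr i && c' i))%N else 0).
  move=> c'; rewrite exc_all forc_shift cjoin0 /=.
  have -> : (\sum_(i < n) (Fr i && (cjoin true c' (lift ord0 i) || false)))%N = (\sum_(i < n) (Fr i && c' i))%N.
    by apply: eq_bigr => i _; rewrite cjoinS orbF.
  by case: [forall i, _]; rewrite ?mulr0 // add1n exprS.
have ef : forall (c' : {ffun 'I_n -> bool}),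
  (if [exists i, cjoin false c' i] && [forall i, cjoin false c' (lift ord0 i) ==> Fr i] then
   y ^+ (cjoin false c' ord0 + \sum_(i < n) (Fr i && (cjoin false c' (lift ord0 i) ||
          ~~ (cjoin false c' ord0 || [exists x : 'I_n, (x < i)%N && cjoin false c' (lift ord0 x)]))))%N else 0)
  = if [exists i, c' i] then (if [forall i, c' i ==> Fr i] then
      y ^+ (\sum_(i < n) (Fr i && (c' i || ~~ [exists x : 'I_n, (x < i)%N && c' x])))%N else 0) else 0.
  move=> c'; rewrite exc_all forc_shift cjoin0 /=.
  have -> : (\sum_(i < n) (Fr i && (cjoin false c' (lift ord0 i) || ~~ [exists x : 'I_n, (x < i)%N && cjoin false c' (lift ord0 x)])))%N
     = (\sum_(i < n) (Fr i && (c' i || ~~ [exists x : 'I_n, (x < i)%N && c' x])))%N.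
    by apply: eq_bigr => i _; rewrite cjoinS exc_shift.
  by case: [exists i, _]; case: [forall i, _].
rewrite (eq_bigr _ (fun c' _ => et c')) (eq_bigr _ (fun c' _ => ef c')).
rewrite -big_distrr /= L1sum sum_exists_split Ksum.
have -> : [forall i, (cz n) i ==> Fr i] = true by apply/forallP => i; rewrite czE.
have -> : (\sum_(i < n) (Fr i && ((cz n) i || ~~ [exists x : 'I_n, (x < i)%N && (cz n) x])))%N
   = (\sum_(i < n) Fr i)%N.
  apply: eq_bigr => i _; rewrite czE /=.
  have -> : [exists x : 'I_n, (x < i)%N && (cz n) x] = false by apply/existsP => -[x]; rewrite czE andbF.
  by rewrite andbT.
ring.
Qed.
End ColSum.

Section PhiRec.
Local Open Scope ring_scope.

Definition Phi n (w : seq bool) (y : rat) : rat :=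
  \sum_(f : {ffun 'I_n * 'I_n -> bool}) (if validB w f then y ^+ nfree w f else 0).

Lemma sum_zero_ffun m (G : {ffun 'I_m -> bool} -> rat) :
  \sum_(c : {ffun 'I_m -> bool}) (if [forall i, ~~ c i] then G c else 0) = G (cz m).
Proof.
rewrite -big_mkcond (big_pred1 (cz m)) // => c /=.
apply/forallP/eqP => [h|-> i]; last by rewrite czE.
by apply/ffunP => i; rewrite czE; apply/negbTE/h.
Qed.

Lemma sum_if_const (T : finType) (C : bool) (X : T -> rat) :
  \sum_t (if C then X t else 0) = if C then \sum_t X t else 0.
Proof. by case: C => //; rewrite big1. Qed.

Lemma PhiS n (w : seq bool) (hw : size w = n) y : Phi n.+1 (rcons w true) y = y * Phi n w y.
Proof.
rewrite /Phi (sum_gjoin ord_max) big_distrr /=; apply: eq_bigr => a _.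
have e : forall c r, (if validB (rcons w true) (gjoin ord_max a c r)
      then y ^+ nfree (rcons w true) (gjoin ord_max a c r) else 0) =
    if [forall i, ~~ c i] then (if [forall j, ~~ r j] then
      (if validB w a then y ^+ (nfree w a).+1 else 0) else 0) else 0.
  move=> c r; rewrite (validS hw) (nfreeS hw).
  by case: (validB w a); case: [forall i, _]; case: [forall j, _].
rewrite (eq_bigr _ (fun c _ => eq_bigr _ (fun r _ => e c r))).
under eq_bigr => c _ do rewrite sum_if_const.
rewrite !sum_zero_ffun.
by case: (validB w a); rewrite ?mulr0 // exprS.
Qed.

Lemma PhiW n (w : seq bool) (hw : size w = n) y : Phi n.+1 (rcons w false) y =
  \sum_(a : {ffun 'I_n * 'I_n -> bool})
     (if validB w a then 2 * y * (1 + y) ^+ nfree w a - y ^+ (nfree w a).+1 else 0).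
Proof.
rewrite /Phi (sum_gjoin ord0); apply: eq_bigr => a _.
rewrite exchange_big /=.
have e : forall c r, (if validB (rcons w false) (gjoin ord0 a c r)
      then y ^+ nfree (rcons w false) (gjoin ord0 a c r) else 0) =
    if [forall j, ~~ r j] then (if validB w a then
      (if [exists i, c i] && [forall i, c (lift ord0 i) ==> free_row w a i]
       then y ^+ nfree (rcons w false) (gjoin ord0 a c r) else 0) else 0) else 0.
  move=> c r; rewrite (validW hw).
  by case: (validB w a); case: [forall j, _]; case: [exists i, _]; case: [forall i, _].
rewrite (eq_bigr _ (fun r _ => eq_bigr _ (fun c _ => e c r))).
under eq_bigr => r _ do rewrite sum_if_const.
rewrite sum_zero_ffun sum_if_const.
case: (validB w a) => //.
under eq_bigr => c _ do rewrite (nfreeW hw a c (@czE n)).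
by rewrite colsum.
Qed.
End PhiRec.

Section Algebra.
Local Open Scope ring_scope.

Lemma PhiSW n (w : seq bool) (hw : size w = n) y :
  Phi n.+1 (rcons w true) y + Phi n.+1 (rcons w false) y = 2 * y * Phi n w (1 + y).
Proof.
rewrite (PhiS hw) (PhiW hw) /Phi big_distrr -big_split big_distrr /=.
apply: eq_bigr => a _; case: (validB w a); last by rewrite !mulr0 addr0.
rewrite exprS; ring.
Qed.

Lemma ds_rcons (w : seq bool) b : double_south (rcons w b) = (double_south w + (b && last false w))%N.
Proof.
rewrite /double_south size_rcons.
case hs: (size w) => [|m].
  by move/size0nil: hs => ->; rewrite !big_geq // andbF.
rewrite big_nat_recr //=; congr (_ + _)%N.
  apply: eq_big_nat => k /andP[hk1 hk2].
  have hk' : (k.-1 < size w)%N by rewrite hs; apply: leq_ltn_trans (leq_pred k) hk2.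
  by rewrite !nth_rcons hs hk2 -hs hk'.
rewrite !nth_rcons hs ltnn eqxx /= leqnn andbC.
by rewrite -(nth_last false w) hs.
Qed.

Lemma sum_tuple0 (G : seq bool -> rat) : \sum_(t : 0.-tuple bool) G t = G [::].
Proof. by rewrite (big_pred1 [tuple]) // => t; apply/esym/eqP; apply: tuple0. Qed.

Lemma Phi0 y : Phi 0 [::] y = 1.
Proof.
rewrite /Phi (eq_bigr (fun _ => 1)).
  by rewrite sumr_const card_ffun card_prod card_ord card_bool.
move=> f _.
have -> : validB [::] f.
  by rewrite /validB /C1 /C2 /C3 /C4; apply/and4P; split; apply/forallP => -[].
by rewrite /nfree big_ord0 expr0.
Qed.

Definition Psi n y := \sum_(t : n.-tuple bool) Phi n t y.
Definition Dd n y := \sum_(t : n.-tuple bool) (double_south t)%:R * Phi n t y.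
Definition Ls n y := \sum_(t : n.-tuple bool) (if last false t then Phi n t y else 0).

Lemma Psi0 y : Psi 0 y = 1.
Proof. by rewrite /Psi (sum_tuple0 (fun s => Phi 0 s y)) Phi0. Qed.
Lemma PsiS n y : Psi n.+1 y = 2 * y * Psi n (1 + y).
Proof.
rewrite /Psi (@sum_tuple_rcons n (fun s => Phi n.+1 s y)) big_distrr /=; apply: eq_bigr => t _.
by rewrite PhiSW // size_tuple.
Qed.
Lemma Ls0 y : Ls 0 y = 0.
Proof. by rewrite /Ls (sum_tuple0 (fun s => if last false s then Phi 0 s y else 0)). Qed.
Lemma LsS n y : Ls n.+1 y = y * Psi n y.
Proof.
rewrite /Ls (@sum_tuple_rcons n (fun s => if last false s then Phi n.+1 s y else 0)) /Psi big_distrr /=; apply: eq_bigr => t _.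
by rewrite !last_rcons addr0 PhiS // size_tuple.
Qed.
Lemma Dd0 y : Dd 0 y = 0.
Proof. by rewrite /Dd (sum_tuple0 (fun s => (double_south s)%:R * Phi 0 s y)) /double_south big_geq // mul0r. Qed.
Lemma DdS n y : Dd n.+1 y = 2 * y * Dd n (1 + y) + y * Ls n y.
Proof.
rewrite /Dd /Ls (@sum_tuple_rcons n (fun s => (double_south s)%:R * Phi n.+1 s y)) !big_distrr -big_split /=; apply: eq_bigr => t _.
rewrite !ds_rcons /= addn0 (mulrCA (2 * y)) -(PhiSW (size_tuple t)) (PhiS (size_tuple t)) natrD.
case: (last false t) => /=; ring.
Qed.

Definition rf (y : rat) k := \prod_(i < k) (y + i%:R).
Lemma rfS y k : rf y k.+1 = y * rf (1 + y) k.
Proof.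
rewrite /rf big_ord_recl /= addr0; congr (_ * _); apply: eq_bigr => i _.
by rewrite /bump /= add1n -addn1 natrD; ring.
Qed.

Lemma Psi_closed n y : Psi n y = 2 ^+ n * rf y n.
Proof.
elim: n y => [|n IH] y; first by rewrite Psi0 /rf big_ord0 mulr1.
by rewrite PsiS IH rfS exprS; ring.
Qed.

Lemma sqS (y : rat) m : \sum_(j < m.+2) (y + j%:R) ^+ 2 = y ^+ 2 + \sum_(j < m.+1) ((1 + y) + j%:R) ^+ 2.
Proof.
rewrite big_ord_recl /= addr0; congr (_ + _); apply: eq_bigr => i _.
by rewrite /bump /= add1n -addn1 natrD; congr (_ ^+ 2); ring.
Qed.

Lemma Dd_closed m y : Dd m.+2 y = 2 ^+ m * rf y m * \sum_(j < m.+1) (y + j%:R) ^+ 2.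
Proof.
elim: m y => [|m IH] y.
  rewrite DdS DdS Dd0 LsS Ls0 Psi0 /rf big_ord0 big_ord1 /= addr0 mulr0 !add0r; ring.
rewrite DdS IH LsS Psi_closed rfS sqS exprS; ring.
Qed.

Lemma rf1 k : rf 1 k = (k`!)%:R.
Proof.
elim: k => [|k IH]; first by rewrite /rf big_ord0.
rewrite /rf big_ord_recr /= -/(rf 1 k) IH factS natrM; ring.
Qed.

Lemma sumsq k : 6 * \sum_(j < k) (1 + j%:R) ^+ 2 = (k * k.+1 * (2 * k).+1)%:R :> rat.
Proof.
elim: k => [|k IH]; first by rewrite big_ord0 mulr0.
rewrite big_ord_recr /= mulrDr IH.
have -> : (k.+1 * k.+2 * (2 * k.+1).+1 = k * k.+1 * (2 * k).+1 + 6 * (k.+1 * k.+1))%N by lia.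
rewrite natrD (natrM _ 6) (natrM _ k.+1) -natr1; ring.
Qed.
End Algebra.

Section Final.
Local Open Scope ring_scope.

Lemma sumB n (G : seq bool -> rat) :
  \sum_(t in Btableaux n) G (tval t.1) = \sum_(w : n.-tuple bool) G w * Phi n w 1.
Proof.
rewrite big_mkcond /=.
under eq_bigr => t _ do rewrite inE validB_is.
rewrite -(pair_bigA _ (fun (w : n.-tuple bool) (f : {ffun 'I_n * 'I_n -> bool}) =>
   if validB (tval w) f then G (tval w) else 0)) /=.
apply: eq_bigr => w _; rewrite /Phi big_distrr /=; apply: eq_bigr => f _.
by case: (validB (tval w) f); rewrite ?mulr0 // expr1n mulr1.
Qed.

Lemma numE n : \sum_(t in Btableaux n) ((double_south (tval t.1))%:R : rat) = Dd n 1.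
Proof. by rewrite (@sumB n (fun w => (double_south w)%:R)). Qed.

Lemma denE n : (#|Btableaux n|)%:R = Psi n 1 :> rat.
Proof.
rewrite -sumr_const (@sumB n (fun _ => 1)) /Psi; apply: eq_bigr => w _; by rewrite mul1r.
Qed.
End Final.

Theorem mainTheorem9 (n : nat) (hn : 2 <= n) :
  E_unif (fun t : Tab n => double_south (tval t.1)) =
  ((2 * n - 1)%:R / 24%:R)%R.
Proof.
rewrite /E_unif numE denE.
case: n hn => [|[|m]] // _.
rewrite Dd_closed Psi_closed rf1 rf1.
have hS := sumsq m.+1.
have -> : (2 * m.+2 - 1 = (2 * m.+1).+1)%N by lia.
rewrite !factS !natrM.
have hf : ((m`!)%:R != 0 :> rat)%R by rewrite pnatr_eq0 -lt0n fact_gt0.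
set S := (\sum_(j < m.+1) _)%R.
have -> : S = ((m.+1 * m.+2 * (2 * m.+1).+1)%:R / 6)%R.
  by rewrite -hS /S; field.
rewrite !natrM.
have e3 : ((2 * m.+1).+1%:R = 2 * m%:R + 3 :> rat)%R by rewrite -natr1 natrM -natr1; ring.
have e2 : (m.+2%:R = m%:R + 2 :> rat)%R by rewrite -natr1 -natr1; ring.
have e1 : (m.+1%:R = m%:R + 1 :> rat)%R by rewrite -natr1.
rewrite e3 e2 e1.
rewrite !exprS.
have hp : (2 ^+ m != 0 :> rat)%R by rewrite expf_neq0.
move: (m`!%:R)%R hf (2 ^+ m)%R hp => f hf p hp.
have h0 : (0 <= m%:R :> rat)%R by apply: ler0n.
have h1 : (m%:R + 1 != 0 :> rat)%R by apply: lt0r_neq0; lra.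
have h2 : (m%:R + 2 != 0 :> rat)%R by apply: lt0r_neq0; lra.
field.
by rewrite hf h1 h2 hp.
Qed.
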